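(* Let $P=X_{\iota(1)}^{\tau(1)}\cdots X_{\iota(k)}^{\tau(k)}$ be a real-eigenvalued symbolic matrix product (possibly including symmetric variables) with $\ell$ variables and degree $k$, where $\tau(i)\in\{1,T,\mathrm{sym}\}$. Let $(F_i,(a_i,b_i))$, $i\in[\ell]$, be edge-rooted graphs. Then the graph $G^2(F_{\iota(1)}^{\tau(1)},\dots,F_{\iota(k)}^{\tau(k)})$ is positive.
   Context: Symbolic products: a formal word $P=\prod_{i=1}^kX_{\iota(i)}^{\tau(i)}$ with $\iota:[k]\to[\ell]$, $\tau:[k]\to\{1,T,\mathrm{sym}\}$, where if $\tau(i)=\mathrm{sym}$ for some $i$ with $\iota(i)=j$ then $\tau(i')=\mathrm{sym}$ for all $i'$ with $\iota(i')=j$. For admissible assignments $A_1,\dots,A_\ell\in\mathbb R^{n\times n}$ ($A_j$ symmetric if $X_j$ carries $\mathrm{sym}$), $P(A_1,\dots,A_\ell)$ substitutes $A_i$ for $X_i,X_i^{\mathrm{sym}}$ and $A_i^T$ for $X_i^T$. $P$ is real-eigenvalued if for all $n$ and all admissible assignments all eigenvalues of $P(A_1,\dots,A_\ell)$ are real. Graphs: an edge-rooted graph is $(F,(a,b))$ with $(a,b)$ an oriented edge of the simple graph $F$. Set $F^1=(F,(a,b))$, $F^T=(F,(b,a))$, and $F^{\mathrm{sym}}$ is the edge-rooted graph obtained from two disjoint copies of $F$ with roots $(a_1,b_1)$, $(a_2,b_2)$ by identifying $a_1$ with $b_2$ (new root $a$) and $b_1$ with $a_2$ (new root $b$), rooted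 at $(a,b)$. For pairwise disjoint edge-rooted graphs $(H_1,(a_1,b_1)),\dots,(H_m,(a_m,b_m))$, the graph $G(H_1,\dots,H_m)$ is obtained from a cycle $v_1v_2\cdots v_m$ by identifying, for each $i$ (indices modulo $m$), the three vertices $b_{i-1}$, $a_i$, $v_i$. Define $G^2(H_1,\dots,H_k)=G(H_1,\dots,H_k,H_{k+1},\dots,H_{2k})$ where $H_{k+i}$ is a disjoint copy of $H_i$; in the claim, disjoint copies of the $F$'s are used for the $k$ positions. An edge-weighted graph $H$ assigns a real weight $\beta_{xy}$ to each edge; for a graph $G$, $\hom(G,H)=\sum_{\varphi}\prod_{uv\in E(G)}\beta_{\varphi(u)\varphi(v)}$ over all homomorphisms $\varphi:G\to H$. $G$ is positive if $\hom(G,H)\ge0$ for every edge-weighted graph $H$ (weights may be negative). *)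

(* Defs.v *)
From HB Require Import structures.
From mathcomp Require Import all_boot all_order all_algebra.
From mathcomp Require Import reals.
From mathcomp Require Import complex.

Set Implicit Arguments.
Unset Strict Implicit.
Unset Printing Implicit Defensive.

Import Order.TTheory GRing.Theory Num.Theory.
Local Open Scope ring_scope.

Inductive mtype := Tone | Ttr | Tsym.

Definition mtype_eqb (s t : mtype) : bool :=
  match s, t with
  | Tone, Tone | Ttr, Ttr | Tsym, Tsym => true
  | _, _ => false
  end.

Definition sym_consistent (l k : nat) (iota : 'I_k -> 'I_l) (tau : 'I_k -> mtype) : Prop :=
  forall i i' : 'I_k, tau i = Tsym -> iota i' = iota i -> tau i' = Tsym.

Definition admissible (R : realType) (l k n : nat) (iota : 'I_k -> 'I_l)
  (tau : 'I_k -> mtype) (A : 'I_l -> 'M[R]_n) : Prop :=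
  forall i : 'I_k, tau i = Tsym -> (A (iota i))^T = A (iota i).

Definition subst_factor (R : realType) (l n : nat) (A : 'I_l -> 'M[R]_n)
  (j : 'I_l) (t : mtype) : 'M[R]_n :=
  match t with
  | Ttr => (A j)^T
  | _ => A j
  end.

Definition eval_prod (R : realType) (l k n : nat) (iota : 'I_k -> 'I_l)
  (tau : 'I_k -> mtype) (A : 'I_l -> 'M[R]_n) : 'M[R]_n :=
  \prod_(i < k) subst_factor A (iota i) (tau i).

Definition real_eigenvalued (R : realType) (l k : nat) (iota : 'I_k -> 'I_l)
  (tau : 'I_k -> mtype) : Prop :=
  forall (n : nat) (A : 'I_l -> 'M[R]_n), admissible iota tau A ->
  forall lam : R[i],
    eigenvalue (map_mx (fun x : R => real_complex R x) (eval_prod iota tau A)) lam ->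
    Im lam = 0.

(* Multigraphs: a finite vertex type and a list (multiset) of edges;
   the orientation of a listed pair is irrelevant for hom below since the
   weight matrices are symmetric. *)
Record mgraph := MGraph { mv : finType; me : seq (mv * mv) }.

Record rgraph := RGraph { rv : finType; re : seq (rv * rv); ra : rv; rb : rv }.

Definition rg_graph (G : rgraph) : mgraph := @MGraph (rv G) (re G).

Record ergraph := ERGraph {
  sv : finType;
  sadj : rel sv;
  sadj_sym : symmetric sadj;
  sadj_irr : irreflexive sadj;
  sa : sv;
  sb : sv;
  sab : sadj sa sb }.

Definition simple_edges (V : finType) (e : rel V) : seq (V * V) :=
  [seq p <- [seq (x, y) | x <- enum V, y <- enum V]
     | e p.1 p.2 && (enum_rank p.1 < enum_rank p.2)%N].

Definition erg_rg (F : ergraph) : rgraph :=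
  @RGraph (sv F) (simple_edges (@sadj F)) (sa F) (sb F).

(* Quotient of a vertex set by the equivalence generated by a list of pairs *)
Definition idrel (V : finType) (ids : seq (V * V)) : rel V :=
  fun x y => ((x, y) \in ids) || ((y, x) \in ids).

Lemma idrel_sym (V : finType) (ids : seq (V * V)) : symmetric (idrel ids).
Proof. by move=> x y; rewrite /idrel orbC. Qed.

Definition qtype (V : finType) (ids : seq (V * V)) : finType :=
  {x : V | fingraph.root (idrel ids) x == x}.

Lemma qproj_subproof (V : finType) (ids : seq (V * V)) (x : V) :
  fingraph.root (idrel ids) (fingraph.root (idrel ids) x) == fingraph.root (idrel ids) x.
Proof. by apply/eqP; apply: fingraph.root_root; apply: sym_connect_sym; apply: idrel_sym. Qed.

Definition qproj (V : finType) (ids : seq (V * V)) (x : V) : qtype ids :=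
  exist _ (fingraph.root (idrel ids) x) (qproj_subproof ids x).

Definition gluem (V : finType) (E : seq (V * V)) (ids : seq (V * V)) : mgraph :=
  @MGraph (qtype ids) [seq (qproj ids p.1, qproj ids p.2) | p <- E].

Definition glue (V : finType) (E : seq (V * V)) (ids : seq (V * V)) (a b : V) : rgraph :=
  @RGraph (qtype ids) [seq (qproj ids p.1, qproj ids p.2) | p <- E]
    (qproj ids a) (qproj ids b).

Definition rg_tr (F : rgraph) : rgraph := @RGraph (rv F) (re F) (rb F) (ra F).

Definition rg_sym (F : rgraph) : rgraph :=
  @glue (rv F + rv F)%type
    ([seq (inl p.1, inl p.2) | p <- re F] ++ [seq (inr p.1, inr p.2) | p <- re F])
    [:: (inl (ra F), inr (rb F)); (inl (rb F), inr (ra F))]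
    (inl (ra F)) (inl (rb F)).

Definition rg_pow (t : mtype) (F : rgraph) : rgraph :=
  match t with
  | Tone => F
  | Ttr => rg_tr F
  | Tsym => rg_sym F
  end.

(* G(H_1, ..., H_m): disjoint union of the H_i, identifying b_{i-1} with a_i
   (indices mod m); the identified vertex is the cycle vertex v_i, and the
   cycle edge v_i v_{i+1} is the root edge a_i b_i of H_i (already present). *)
Definition Gcyc (m : nat) (H : 'I_m -> rgraph) : mgraph :=
  @gluem {i : 'I_m & rv (H i)}
     (flatten [seq [seq (@Tagged _ i (fun j => rv (H j)) p.1,
                         @Tagged _ i (fun j => rv (H j)) p.2) | p <- re (H i)]
              | i <- enum 'I_m])
     [seq (@Tagged _ i (fun j => rv (H j)) (rb (H i)),
           @Tagged _ (ordS i) (fun j => rv (H j)) (ra (H (ordS i))))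
     | i <- enum 'I_m].

(* G^2(H_1,...,H_k) = G(H_1,...,H_k,H_{k+1},...,H_{2k}) with H_{k+i} a disjoint
   copy of H_i (disjointness is automatic in the tagged union above). *)
Definition G2 (k : nat) (H : 'I_k -> rgraph) : mgraph :=
  @Gcyc (k + k) (fun i => match split i with inl j => H j | inr j => H j end).

(* An edge-weighted graph H on vertex set 'I_n is given by a symmetric real
   matrix beta of edge weights (beta_xy = 0 meaning "no edge"); then
   hom(G,H) = sum over maps phi : V(G) -> V(H) of prod_{uv in E(G)} beta_{phi u phi v}
   (maps that are not homomorphisms contribute 0). *)
Definition hom (R : realType) (G : mgraph) (n : nat) (beta : 'M[R]_n) : R :=
  \sum_(phi : {ffun mv G -> 'I_n}) \prod_(p <- me G) beta (phi p.1) (phi p.2).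

Definition positive_graph (R : realType) (G : mgraph) : Prop :=
  forall (n : nat) (beta : 'M[R]_n), beta^T = beta -> 0 <= hom G beta.

(* Main.v *)
Require Import Defs.
From HB Require Import structures.
From mathcomp Require Import all_boot all_order all_algebra.
From mathcomp Require Import reals.
From mathcomp Require Import complex.
Set Implicit Arguments.
Unset Strict Implicit.
Unset Printing Implicit Defensive.
Import Order.TTheory GRing.Theory Num.Theory.
Local Open Scope ring_scope.

Lemma trig_tr_sq (C : numClosedFieldType) n (T : 'M[C]_n) :
  is_trig_mx T -> \tr (T *m T) = \sum_i T i i ^+ 2.
Proof.
move=> /is_trig_mxP Tt; rewrite /mxtrace; apply: eq_bigr => i _.
rewrite mxE (bigD1 i) //= big1 ?addr0 ?expr2 // => j /negbTE ji.
have [lt|lt|eq] := ltngtP i j.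
- by rewrite Tt // mul0r.
- by rewrite (Tt j i) // mulr0.
- by move: ji; rewrite (val_inj eq) eqxx.
Qed.

Lemma Cr0 (R : realType) (b : R) : (b%:C)%C = 0 -> b = 0.
Proof. move=> h. have := congr1 (@complex.Re R) h. by []. Qed.

Lemma tr_sq_ge0 (R : realType) n (P : 'M[R]_n) :
  (forall lam : R[i], eigenvalue (map_mx (fun x : R => real_complex R x) P) lam -> Im lam = 0) ->
  0 <= \tr (P *m P).
Proof.
move=> Hev; case: n P Hev => [|n] P Hev; first by rewrite /mxtrace big_ord0.
set B := map_mx (fun x : R => real_complex R x) P.
have HB : B = map_mx (real_complex R) P by [].
have [U Uu /= Tt] := Schur B (ltn0Sn n).
have Uunit := unitarymx_unit Uu.
set T := conjmx U B in Tt.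
have TE : T = U *m B *m invmx U by rewrite /T conjumx.
have trE : \tr (T *m T) = \tr (B *m B).
  have -> : T *m T = U *m ((B *m B) *m invmx U).
    by rewrite TE !mulmxA -(mulmxA _ (invmx U) U) mulVmx // mulmx1.
  by rewrite mxtrace_mulC -!mulmxA mulVmx // mulmx1.
have : (0 : R[i]) <= \tr (T *m T).
  rewrite trig_tr_sq // sumr_ge0 // => i _.
  have ev : eigenvalue B (T i i).
    apply: (eigenvalue_conjmx (V := U)).
    - by apply: submx_full; rewrite row_full_unit.
    - by rewrite -row_full_unit in Uunit; rewrite /row_free; move/eqnP: Uunit => ->.
    - rewrite -/T; have -> : (T i i \in eigenvalue T) = root (char_poly T) (T i i) by exact: eigenvalue_root_char.
      by rewrite char_poly_trig // rootE horner_prod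
        prodf_seq_eq0; apply/hasP; exists i; rewrite ?mem_index_enum // !hornerE subrr.
  have := Hev _ ev; rewrite -complexIm => /Cr0.
  case: (T i i) => a b /= ->.
  by rewrite complexr0 -rmorphXn ler0c sqr_ge0.
by rewrite trE HB -map_mxM trace_map_mx ler0c.
Qed.

Lemma sum_sigma (R : comRingType) (I : finType) (T_ : I -> finType) (K : finType) (k0 : K)
  (G : forall i, {ffun T_ i -> K} -> R) :
  \sum_(psi : {ffun {i : I & T_ i} -> K}) \prod_i G i [ffun v => psi (Tagged T_ v)] =
  \prod_i \sum_(phi : {ffun T_ i -> K}) G i phi.
Proof.
pose TF := fun i => {ffun T_ i -> K}.
pose J := {i : I & TF i}.
pose G' := fun j : J => G (tag j) (tagged j).
have step1 i : \sum_(phi : {ffun T_ i -> K}) G i phi = \sum_(j : J | tag j == i) G' j.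
  have := @sig_big_dep R 0 +%R I TF (pred1 i) (fun _ _ => true) G.
  rewrite (big_pred1 i) // => ->; apply: eq_bigl => j; by rewrite andbT.
under [RHS]eq_bigr => i _ do rewrite step1.
rewrite bigA_distr_big_dep.
pose h := fun psi : {ffun {i : I & T_ i} -> K} =>
  [ffun i : I => (existT TF i [ffun v : T_ i => psi (existT T_ i v)] : J)].
rewrite (reindex h) /=; last first.
  exists (fun f : {ffun I -> J} => [ffun s : {i : I & T_ i} =>
     (tagged_as (existT TF (tag s) [ffun=> k0] : J) (f (tag s))) (tagged s)]).
    move=> psi _; apply/ffunP => -[i v]; rewrite !ffunE /=.
    by rewrite tagged_asE ffunE.
  move=> f; rewrite inE => /familyP Hf; apply/ffunP => i; rewrite !ffunE.
  under eq_ffun => v do rewrite ffunE /=.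
  have := Hf i; case: (f i) => i' phi /= Heq.
  rewrite unfold_in /= in Heq; move/eqP: Heq => Heq; subst i'.
  congr (Tagged _ _); apply/ffunP => v; rewrite !ffunE /=.
  by rewrite tagged_asE.
apply: eq_big => psi.
  by apply/esym/familyP => i; rewrite unfold_in /= ffunE.
move=> _; apply: eq_bigr => i _; by rewrite /G' ffunE.
Qed.

Section Path.
Variables (R : comRingType) (n : nat).

Lemma path_prod m (M : nat -> 'M[R]_n) (a b : 'I_n) :
  (\prod_(i < m) M i) a b =
  \sum_(x : {ffun 'I_m.+1 -> 'I_n} | (x ord0 == a) && (x ord_max == b))
     \prod_(i < m) M i (x (widen_ord (leqnSn m) i)) (x (lift ord0 i)).
Proof.
elim: m M a b => [|m IH] M a b.
  rewrite big_ord0 mxE.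
  have Hx (x : {ffun 'I_1 -> 'I_n}) : x ord_max = x ord0 by congr (x _); apply: val_inj.
  under eq_bigr do rewrite big_ord0.
  have [<-|ab] := eqVneq a b.
    rewrite (big_pred1 [ffun=> a]) // => x; rewrite Hx andbb.
    apply/eqP/eqP; last by move/ffunP/(_ ord0); rewrite ffunE.
    by move=> H; apply/ffunP => i; rewrite ffunE ord1 H.
  rewrite big_pred0 // => x; rewrite Hx; apply/negP => /andP[/eqP xa /eqP xb].
  by rewrite -xa -xb eqxx in ab.
rewrite big_ord_recl -mulmxE mxE.
under eq_bigr do rewrite (IH (fun i => M i.+1)) big_distrr /=.
rewrite (exchange_big_dep (fun x : {ffun 'I_m.+1 -> 'I_n} => x ord_max == b)) /=; last first.
  by move=> c x _ /andP[].
pose h := fun x' : {ffun 'I_m.+1 -> 'I_n} =>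
  [ffun j : 'I_m.+2 => (if unlift ord0 j is Some j' then x' j' else a : 'I_n)] : {ffun 'I_m.+2 -> 'I_n}.
symmetry; rewrite (reindex h) /=; last first.
  exists (fun x : {ffun 'I_m.+2 -> 'I_n} => [ffun j' : 'I_m.+1 => x (lift ord0 j')]).
    by move=> x' _; apply/ffunP => j'; rewrite !ffunE liftK.
  move=> x; rewrite inE => /andP[/eqP x0 _]; apply/ffunP => j; rewrite !ffunE.
  by case: unliftP => [j' ->|->]; rewrite ?ffunE.
have hmax x' : h x' ord_max = x' ord_max.
  have -> : (ord_max : 'I_m.+2) = lift ord0 (ord_max : 'I_m.+1) by apply: val_inj.
  by rewrite ffunE liftK.
apply: eq_big => x'.
  by rewrite hmax ffunE unlift_none eqxx.
move=> /andP[_]; rewrite hmax => xb; rewrite (big_pred1 (x' ord0)); last by move=> c; rewrite xb andbT eq_sym.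
rewrite big_ord_recl; congr (_ * _).
  congr (M 0 _ _); rewrite ffunE.
    have -> : widen_ord (leqnSn m.+1) ord0 = ord0 by apply: val_inj.
    by rewrite unlift_none.
  by rewrite liftK.
apply: eq_bigr => i _; congr (M _ _ _); rewrite ffunE.
  have -> : widen_ord (leqnSn m.+1) (lift ord0 i) = lift ord0 (widen_ord (leqnSn m) i).
    by apply: val_inj.
  by rewrite liftK.
by rewrite liftK.
Qed.

Lemma tr_prod m (M : 'I_m.+1 -> 'M[R]_n) :
  \tr (\prod_(i < m.+1) M i) =
  \sum_(y : {ffun 'I_m.+1 -> 'I_n}) \prod_(i < m.+1) M i (y i) (y (ordS i)).
Proof.
pose Mn := fun j : nat => M (inord j).
have -> : \prod_(i < m.+1) M i = \prod_(i < m.+1) Mn i.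
  by apply: eq_bigr => i _; rewrite /Mn inord_val.
rewrite /mxtrace; under eq_bigr do rewrite path_prod.
rewrite (exchange_big_dep (fun x : {ffun 'I_m.+2 -> 'I_n} => x ord0 == x ord_max)) /=; last first.
  by move=> a x _ /andP[/eqP -> /eqP ->].
pose h := fun y : {ffun 'I_m.+1 -> 'I_n} => [ffun j : 'I_m.+2 => y (inord (j %% m.+1))].
rewrite (reindex h) /=; last first.
  exists (fun x : {ffun 'I_m.+2 -> 'I_n} => [ffun i : 'I_m.+1 => x (widen_ord (leqnSn m.+1) i)]).
    move=> y _; apply/ffunP => i; rewrite !ffunE /= modn_small //.
    by rewrite inord_val.
  move=> x; rewrite inE => /eqP x0; apply/ffunP => j; rewrite !ffunE.
  have [jm|jm] := ltnP j m.+1.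
    rewrite modn_small //; congr (x _); apply: val_inj => /=; by rewrite inordK.
  have jE : j = ord_max by apply: val_inj => /=; apply/eqP; rewrite eqn_leq jm -ltnS ltn_ord.
  rewrite jE /= modnn -x0; congr (x _); apply: val_inj => /=; by rewrite inordK.
apply: eq_big => y.
  by rewrite !ffunE /= modnn mod0n eqxx.
have hy : h y ord_max = h y ord0 by rewrite !ffunE /= modnn mod0n.
move=> _; rewrite (big_pred1 (h y ord0)); last by move=> c; rewrite hy andbb eq_sym.
apply: eq_bigr => i _; rewrite /Mn inord_val !ffunE /=; congr (M _ _ _).
  by rewrite modn_small // inord_val.
by congr (y _); apply: val_inj => /=; rewrite inordK // ltn_pmod.
Qed.
End Path.

Section Glue.
Variables (R : comRingType) (V K : finType) (ids : seq (V * V)).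

Definition respects (psi : {ffun V -> K}) := all (fun p => psi p.1 == psi p.2) ids.
Definition liftq (phi : {ffun qtype ids -> K}) : {ffun V -> K} :=
  [ffun x => phi (qproj ids x)].

Lemma respects_connect psi x y : respects psi -> connect (idrel ids) x y -> psi x = psi y.
Proof.
move=> /allP Hr /connectP [p pth ->] {y}; elim: p x pth => //= z p IH x /andP[exz pth].
rewrite -IH //; move: exz; rewrite /idrel => /orP[] H; have /eqP := Hr _ H => //= ->.
Qed.

Lemma qprojK (q : qtype ids) : qproj ids (val q) = q.
Proof. by apply: val_inj => /=; apply/eqP; case: q. Qed.

Lemma glue_sum (P : pred {ffun V -> K}) (G : {ffun V -> K} -> R) :
  \sum_(phi : {ffun qtype ids -> K} | P (liftq phi)) G (liftq phi) =
  \sum_(psi | respects psi && P psi) G psi.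
Proof.
symmetry; rewrite (reindex liftq) /=.
  apply: eq_bigl => phi; rewrite andb_idl // => _; apply/allP => p pin.
  rewrite !ffunE; apply/eqP; congr (phi _); apply: val_inj => /=.
  apply/eqP; rewrite root_connect; last exact/sym_connect_sym/idrel_sym.
  by apply: connect1; rewrite /idrel -surjective_pairing pin.
exists (fun psi : {ffun V -> K} => [ffun q : qtype ids => psi (val q)]).
  by move=> phi _; apply/ffunP => q; rewrite !ffunE qprojK.
move=> psi; rewrite inE => /andP[Hr _]; apply/ffunP => x; rewrite !ffunE /=.
by apply/esym/respects_connect => //; exact: connect_root.
Qed.
End Glue.

Section RM.
Variable R : realType.

Definition W (V : finType) (E : seq (V * V)) n (beta : 'M[R]_n) (phi : {ffun V -> 'I_n}) :=
  \prod_(p <- E) beta (phi p.1) (phi p.2).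

Lemma hom_gluem (V : finType) (E ids : seq (V * V)) n (beta : 'M[R]_n) :
  Defs.hom (gluem E ids) beta = \sum_(psi | respects ids psi) W E beta psi.
Proof.
rewrite /Defs.hom /=.
transitivity (\sum_(phi : {ffun qtype ids -> 'I_n} | xpredT (liftq phi)) W E beta (liftq phi)).
  apply: eq_bigr => phi _; rewrite big_map /W; apply: eq_bigr => p _.
  by rewrite !ffunE.
rewrite (glue_sum _ xpredT (W E beta)); apply: eq_bigl => psi; by rewrite andbT.
Qed.

Definition RM (H : Defs.rgraph) n (beta : 'M[R]_n) : 'M[R]_n :=
  \matrix_(x, y) \sum_(phi : {ffun rv H -> 'I_n} | (phi (ra H) == x) && (phi (rb H) == y))
     W (re H) beta phi.

Lemma RM_tr (H : Defs.rgraph) n (beta : 'M[R]_n) : RM (rg_tr H) beta = (RM H beta)^T.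
Proof. by apply/matrixP => x y; rewrite !mxE; apply: eq_bigl => phi; rewrite andbC. Qed.

Definition fsum (V K : finType) (fg : {ffun V -> K} * {ffun V -> K}) : {ffun (V + V)%type -> K} :=
  [ffun s => match s with inl v => fg.1 v | inr v => fg.2 v end].

Lemma RM_sym (H : Defs.rgraph) n (beta : 'M[R]_n) :
  RM (rg_sym H) beta = \matrix_(x, y) (RM H beta x y * RM H beta y x).
Proof.
apply/matrixP => x y; rewrite !mxE /rg_sym /glue /=.
set ids := [:: _; _].
set E := _ ++ _.
transitivity (\sum_(phi : {ffun qtype ids -> 'I_n} |
   (fun psi : {ffun (rv H + rv H)%type -> 'I_n} => (psi (inl (ra H)) == x) && (psi (inl (rb H)) == y)) (liftq phi))
   W E beta (liftq phi)).
  apply: eq_big => phi; first by rewrite !ffunE.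
  move=> _; rewrite /W big_map; apply: eq_bigr => p _; by rewrite !ffunE.
rewrite (glue_sum _ (fun psi : {ffun (rv H + rv H)%type -> 'I_n} => (psi (inl (ra H)) == x) && (psi (inl (rb H)) == y)) (W E beta)).
rewrite big_distrlr pair_big_dep /=.
rewrite (reindex (@fsum (rv H) 'I_n)) /=; last first.
  exists (fun psi => ([ffun v => psi (inl v)], [ffun v => psi (inr v)])).
    by move=> [f g] _; congr pair; apply/ffunP => v; rewrite !ffunE.
  by move=> psi _; apply/ffunP => -[v|v]; rewrite !ffunE.
apply: eq_big => [[f g]|[f g] _] /=.
  rewrite /respects /= !ffunE /= andbT.
  case: (f (ra H) =P x) => [->|] /=; last by rewrite !andbF.
  case: (f (rb H) =P y) => [->|] /=; last by rewrite !andbF.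
  by rewrite andbT andbC [y == _]eq_sym [x == _]eq_sym.
rewrite /W /E big_cat /= !big_map; congr (_ * _); apply: eq_bigr => p _; by rewrite !ffunE.
Qed.
End RM.

Lemma prod_if (R : comRingType) (I : finType) (b : pred I) (f : I -> R) :
  \prod_i (if b i then f i else 0) = if [forall i, b i] then \prod_i f i else 0.
Proof.
case: ifP => [/forallP Hb|/negbT]; first by apply: eq_bigr => i _; rewrite Hb.
rewrite negb_forall => /existsP [i /negbTE bi].
by rewrite (bigD1 i) //= bi mul0r.
Qed.

Section Cyc.
Variable R : realType.

Lemma hom_Gcyc m (H : 'I_m.+1 -> Defs.rgraph) n (beta : 'M[R]_n.+1) :
  Defs.hom (Gcyc H) beta = \tr (\prod_(i < m.+1) RM (H i) beta).
Proof.
rewrite /Gcyc hom_gluem tr_prod.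
pose r (psi : {ffun {i : 'I_m.+1 & rv (H i)} -> 'I_n.+1}) i :=
   [ffun v : rv (H i) => psi (existT (fun j => rv (H j)) i v)] : {ffun rv (H i) -> 'I_n.+1}.
pose c (y : {ffun 'I_m.+1 -> 'I_n.+1}) i (phi : {ffun rv (H i) -> 'I_n.+1}) :=
   (phi (ra (H i)) == y i) && (phi (rb (H i)) == y (ordS i)).
have E (y : {ffun 'I_m.+1 -> 'I_n.+1}) : \prod_i RM (H i) beta (y i) (y (ordS i)) =
   \sum_(psi : {ffun {i : 'I_m.+1 & rv (H i)} -> 'I_n.+1}) \prod_i (if c y i (r psi i) then W (re (H i)) beta (r psi i) else 0).
  rewrite (sum_sigma ord0 (fun i phi => if c y i phi then W (re (H i)) beta phi else 0)).
  by apply: eq_bigr => i _; rewrite mxE big_mkcond.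
under [RHS]eq_bigr do rewrite E.
rewrite exchange_big /= big_mkcond; apply: eq_bigr => psi _.
under eq_bigr do rewrite prod_if.
rewrite -big_mkcond /=.
pose y0 := [ffun i => psi (existT (fun j => rv (H j)) i (ra (H i)))].
have resp : respects
   [seq (existT (fun j => rv (H j)) i (rb (H i)), existT (fun j => rv (H j)) (ordS i) (ra (H (ordS i))))
     | i <- enum 'I_m.+1] psi =
   [forall i, psi (existT (fun j => rv (H j)) i (rb (H i))) ==
              psi (existT (fun j => rv (H j)) (ordS i) (ra (H (ordS i))))].
  rewrite /respects all_map; apply/allP/forallP => [Ha i|Ha i _]; last exact: Ha.
  by apply: (Ha i); rewrite mem_enum.
have Wflat : W (flatten [seq [seq (existT (fun j => rv (H j)) i p.1, existT (fun j => rv (H j)) i p.2)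
                  | p <- re (H i)] | i <- enum 'I_m.+1]) beta psi =
             \prod_i W (re (H i)) beta (r psi i).
  rewrite /W big_flatten /= big_map big_enum /=; apply: eq_bigr => i _.
  by rewrite big_map; apply: eq_bigr => p _; rewrite !ffunE.
rewrite resp Wflat.
have Hpred (y : {ffun 'I_m.+1 -> 'I_n.+1}) : [forall i, c y i (r psi i)] =
   [forall i, psi (existT (fun j => rv (H j)) i (rb (H i))) ==
              psi (existT (fun j => rv (H j)) (ordS i) (ra (H (ordS i))))] && (y == y0).
  apply/forallP/andP => [Hc|[/forallP Hr /eqP ->] i].
    split; last first.
      by apply/eqP/ffunP => i; have := Hc i; rewrite /c !ffunE => /andP[/eqP <- _].
    apply/forallP => i; have := Hc i; rewrite /c !ffunE => /andP[_ /eqP ->].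
    by have := Hc (ordS i); rewrite /c !ffunE => /andP[/eqP <- _].
  by rewrite /c !ffunE eqxx (eqP (Hr i)) eqxx.
rewrite (eq_bigl _ _ Hpred).
case: ifP => _ /=.
  by rewrite (big_pred1 y0) // => y.
by rewrite big_pred0.
Qed.
End Cyc.

Lemma hom_nil (R : realType) (G : mgraph) n (beta : 'M[R]_n) : me G = [::] -> 0 <= Defs.hom G beta.
Proof. by move=> E; apply: sumr_ge0 => phi _; rewrite E big_nil ler01. Qed.

Lemma hom_n0 (R : realType) (G : mgraph) (beta : 'M[R]_0) : 0 <= Defs.hom G beta.
Proof.
apply: sumr_ge0 => phi _; case: (me G) => [|p E]; first by rewrite big_nil ler01.
by case: (phi p.1).
Qed.

Theorem mainTheorem12 (R : realType) (l k : nat)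
  (iota : 'I_k -> 'I_l) (tau : 'I_k -> mtype) (F : 'I_l -> ergraph) :
  sym_consistent iota tau ->
  real_eigenvalued R iota tau ->
  positive_graph R (G2 (fun i : 'I_k => rg_pow (tau i) (erg_rg (F (iota i))))).
Proof.
move=> sc rev [|n] beta bsym; first exact: hom_n0.
case: k iota tau sc rev => [|k] iota tau sc rev.
  apply: hom_nil => /=.
  have -> : enum 'I_(0 + 0) = [::] by apply/size0nil; rewrite size_enum_ord.
  by [].
set H := fun i : 'I_k.+1 => _.
rewrite /G2 (@hom_Gcyc R (k + k.+1) _ n beta).
pose issym j := [exists i, (iota i == j) && mtype_eqb (tau i) Tsym].
pose A := fun j => if issym j then \matrix_(x, y) (RM (erg_rg (F j)) beta x y * RM (erg_rg (F j)) beta y x)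
                   else RM (erg_rg (F j)) beta.
have HA i : RM (H i) beta = subst_factor A (iota i) (tau i).
  rewrite /H /A /subst_factor.
  have nsym : tau i <> Tsym -> issym (iota i) = false.
    move=> ns; apply/negbTE/existsP => -[i' /andP[/eqP e s]].
    apply: ns; apply: (sc i' i) => //.
    by move: s; case: (tau i').
  case E: (tau i) => /=.
  - by rewrite nsym ?E.
  - by rewrite nsym ?E // RM_tr.
  - have -> : issym (iota i) by apply/existsP; exists i; rewrite eqxx E.
    by rewrite RM_sym.
have adm : admissible iota tau A.
  move=> i Ti; rewrite /A.
  have -> : issym (iota i) by apply/existsP; exists i; rewrite eqxx Ti.
  by apply/matrixP => x y; rewrite !mxE mulrC.
have := tr_sq_ge0 (rev _ A adm).
rewrite (@big_split_ord _ _ _ k.+1 k.+1) /=.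
congr (_ <= \tr _); rewrite mulmxE /eval_prod; congr (_ * _); apply: eq_bigr => i _.
  by rewrite (unsplitK (inl i)) HA.
by rewrite (unsplitK (inr i)) HA.
Qed.
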